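(* Let $g_{GB}$ and $g_{GF}$ be independent random variables, where $g_{GB}=|h_{GB}|^2d_{GB}^{-\alpha}$ with $d_{GB}$ the distance to the origin of a point uniform in the disc $|z|\le R_1$, and $g_{GF}=|h_{GF}|^2d_{GF}^{-\alpha}$ with $d_{GF}$ the distance to the origin of a point uniform in the annulus $R_1\le|z|\le R_2$, the fading powers $|h_{GB}|^2,|h_{GF}|^2$ being exponential (means $\lambda_{GB},\lambda_{GF}$) and independent of the distances. Let $P_{GB},P_{GF},\sigma^2>0$, $\rho_{GB}=P_{GB}/\sigma^2$, $\rho_{GF}=P_{GF}/\sigma^2$, $\gamma_{th}^{GB}>0$, and define $$P^{GB,I}_{out,p_2}=\Pr\left\{\frac{\rho_{GB}g_{GB}}{\rho_{GF}g_{GF}+1}<\gamma_{th}^{GB},\ g_{GF}<\frac{P_{GB}}{P_{GF}}g_{GB}\right\}.$$ Let $F^{near}_{g_{GB}}$ be the CDF of $g_{GB}$ and $f^{far}_{g_{GF}}$ the density of $g_{GF}$. Then: (a) if $\gamma_{th}^{GB}>1$, $$P^{GB,I}_{out,p_2}=\int_0^\infty F^{near}_{g_{GB}}\!\left(\frac{\gamma_{th}^{GB}\rho_{GF}x+\gamma_{th}^{GB}}{\rho_{GB}}\right)f^{far}_{g_{GF}}(x)\,dx-\int_0^\infty F^{near}_{g_{GB}}\!\left(\frac{\rho_{GF}}{\rho_{GB}}x\right)f^{far}_{g_{GF}}(x)\,dx;$$ (b) if $\gamma_{th}^{GB}\le1$, then with $\sigma_1=\frac{\gamma_{th}^{GB}}{\rho_{GF}(1-\gamma_{th}^{GB})}$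 (interpreted as $\sigma_1=+\infty$ when $\gamma_{th}^{GB}=1$), $$P^{GB,I}_{out,p_2}=\int_0^{\sigma_1} F^{near}_{g_{GB}}\!\left(\frac{\gamma_{th}^{GB}\rho_{GF}x+\gamma_{th}^{GB}}{\rho_{GB}}\right)f^{far}_{g_{GF}}(x)\,dx-\int_0^{\sigma_1} F^{near}_{g_{GB}}\!\left(\frac{\rho_{GF}}{\rho_{GB}}x\right)f^{far}_{g_{GF}}(x)\,dx.$$
   Context: Setting (''Scenario I'', dynamic protocol) of an uplink semi-grant-free NOMA pair: a grant-based (GB) user is the near user in a disc of radius $R_1$ around the base station at the origin and a grant-free (GF) user is the far user in the annulus between radii $R_1<R_2$; $\alpha>0$ is the path loss exponent, $\sigma^2$ the noise power, $P_{GB},P_{GF}$ transmit powers. The GF user is admitted only if $P_{GF}g_{GF}<P_{GB}g_{GB}$, and $P^{GB,I}_{out,p_2}$ is the outage probability of the GB user with target SINR $\gamma_{th}^{GB}$. *)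

(* Defs.v *)
From HB Require Import structures.
From mathcomp Require Import all_boot all_order all_algebra.
From mathcomp Require Import all_classical all_reals all_analysis.
Set Implicit Arguments. Unset Strict Implicit. Unset Printing Implicit Defensive.
Import Order.TTheory GRing.Theory Num.Def Num.Theory.
Local Open Scope classical_set_scope.
Local Open Scope ring_scope.

Definition indep2 d (T : measurableType d) (R : realType) (P : probability T R)
  d1 d2 (T1 : measurableType d1) (T2 : measurableType d2)
  (X : T -> T1) (Y : T -> T2) : Prop :=
  forall A B, measurable A -> measurable B ->
    P (X @^-1` A `&` Y @^-1` B) = (P (X @^-1` A) * P (Y @^-1` B))%E.

Definition leb2 (R : realType) :=
  ((@lebesgue_measure R) \x (@lebesgue_measure R))%E.

Definition sqnorm2 (R : realType) (z : R * R) : R := z.1 ^+ 2 + z.2 ^+ 2.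

Definition dist0 (R : realType) (z : R * R) : R := Num.sqrt (sqnorm2 z).

Definition disc (R : realType) (r : R) : set (R * R) :=
  [set z | sqnorm2 z <= r ^+ 2].
Definition annulus (R : realType) (r1 r2 : R) : set (R * R) :=
  [set z | r1 ^+ 2 <= sqnorm2 z <= r2 ^+ 2].

Definition uniform_on d (T : measurableType d) (R : realType)
  (P : probability T R) (Z : T -> R * R) (D : set (R * R)) (area : R) : Prop :=
  forall A, measurable A -> P (Z @^-1` A) = (@leb2 R (A `&` D) * (area^-1)%:E)%E.

(* H is exponentially distributed with mean lam (rate lam^-1) *)
Definition exp_mean d (T : measurableType d) (R : realType)
  (P : probability T R) (H : T -> R) (lam : R) : Prop :=
  forall A, measurable A -> P (H @^-1` A) = exponential_prob (lam^-1) A.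

Definition cdfR d (T : measurableType d) (R : realType)
  (P : probability T R) (X : T -> R) (y : R) : R :=
  fine (P [set w | X w <= y]).

Definition is_density d (T : measurableType d) (R : realType)
  (P : probability T R) (X : T -> R) (f : R -> R) : Prop :=
  (forall x, 0 <= f x) /\ measurable_fun [set: R] f /\
  forall A, measurable A ->
    P (X @^-1` A) = (\int[lebesgue_measure]_(x in A) (f x)%:E)%E.

Definition gain (R : realType) (alpha h dist : R) : R := h * dist `^ (- alpha).

Definition dom_b (R : realType) (gam rhoGF : R) : set R :=
  if gam == 1 then `[0, +oo[%classic
  else `[0, gam / (rhoGF * (1 - gam))[%classic.

(* Main.v *)
Require Import Defs.
From HB Require Import structures.
From mathcomp Require Import all_boot all_order all_algebra.
From mathcomp Require Import all_classical all_reals all_analysis.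
From mathcomp Require Import measurable_realfun.
From mathcomp Require Import ring lra.
Import Order.TTheory GRing.Theory Num.Def Num.Theory.
Local Open Scope classical_set_scope.
Local Open Scope ring_scope.

Definition gm {d d'} {T : measurableType d} {T' : measurableType d'} {g : T -> T'}
  (mg : measurable_fun [set: T] g) : {mfun T >-> T'} :=
  mfun_Sub (mem_set mg : g \in mfun).

Lemma distrE {d d'} {T : measurableType d} {T' : measurableType d'} {R : realType}
  (P : probability T R) (X : {mfun T >-> T'}) A :
  distribution P X A = P (X @^-1` A).
Proof. by []. Qed.

Lemma measurable_inv (R : realType) : measurable_fun [set: R] (@GRing.inv R).
Proof.
have -> : [set: R] = [set 0] `|` ~` [set 0] by rewrite setUv.
apply/measurable_funU => //.
- exact: measurableC.
split; first exact: measurable_fun_set1.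
apply: open_continuous_measurable_fun.
  by apply: closed_openC; apply: accessible_closed_set1; exact: hausdorff_accessible.

move=> x; rewrite inE /= => /eqP x0.
exact: inv_continuous.
Qed.


Lemma key1 (R : realFieldType) (rB rF gam x y : R) : 0 < rB -> 0 < rF -> 0 <= x ->
  (rB * y / (rF * x + 1) < gam /\ x < rB / rF * y) <->
  (rF / rB * x < y /\ y < (gam * rF * x + gam) / rB).
Proof.
move=> rB0 rF0 x0.
have h : 0 < rF * x + 1 by rewrite ltr_wpDl // mulr_ge0 // ltW.
rewrite ltr_pdivrMr // (mulrAC rB) ltr_pdivlMr // (mulrAC rF) ltr_pdivrMr //.
rewrite ltr_pdivlMr //.
split => -[h1 h2]; split; lra.
Qed.

Lemma key2 (R : realFieldType) (rB rF gam x : R) : 0 < rB ->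
  (rF / rB * x < (gam * rF * x + gam) / rB) <-> (rF * x < gam * rF * x + gam).
Proof.
move=> rB0; rewrite (mulrAC rF) ltr_pdivrMr // divfK ?gt_eqF //.
Qed.

Lemma eq_mod_null {d} {T : measurableType d} {R : realType}
  (mu : {measure set T -> \bar R}) (A B N : set T) :
  measurable A -> measurable B -> measurable N -> mu N = 0%E ->
  A `<=` B `|` N -> B `<=` A `|` N -> mu A = mu B.
Proof.
move=> mA mB mN N0 AB BA.
have h1 : (mu (B `|` N) <= mu B)%E.
  by apply: (le_trans (measureU2 _ mB mN)); apply: geeDl; move: N0 => /= ->.
have h2 : (mu (A `|` N) <= mu A)%E.
  by apply: (le_trans (measureU2 _ mA mN)); apply: geeDl; move: N0 => /= ->.
have h3 : (mu A <= mu (B `|` N))%E.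
  by apply: le_measure => //; rewrite inE //; exact: measurableU.
have h4 : (mu B <= mu (A `|` N))%E.
  by apply: le_measure => //; rewrite inE //; exact: measurableU.
apply/eqP; rewrite eq_le; apply/andP; split.
  exact: le_trans h3 h1.
exact: le_trans h4 h2.
Qed.

Lemma mlt {d} {T : measurableType d} {R : realType} (f g : T -> R) :
  measurable_fun setT f -> measurable_fun setT g -> measurable [set x | f x < g x].
Proof.
move=> mf mg.
rewrite (_ : [set x | _] = setT `&` (g \- f) @^-1` `]0, +oo[).
  by apply: measurable_funB => //; exact: measurable_itv.
by rewrite predeqE => x /=; rewrite in_itv /= andbT subr_gt0; split => [->|[]].
Qed.

Lemma mle {d} {T : measurableType d} {R : realType} (f g : T -> R) :
  measurable_fun setT f -> measurable_fun setT g -> measurable [set x | f x <= g x].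
Proof.
move=> mf mg.
rewrite (_ : [set x | _] = setT `&` (g \- f) @^-1` `[0, +oo[).
  by apply: measurable_funB => //; exact: measurable_itv.
by rewrite predeqE => x /=; rewrite in_itv /= andbT subr_ge0; split => [->|[]].
Qed.

Lemma meq {d} {T : measurableType d} {R : realType} (f g : T -> R) :
  measurable_fun setT f -> measurable_fun setT g -> measurable [set x | f x = g x].
Proof.
move=> mf mg.
rewrite (_ : [set x | _] = setT `&` (g \- f) @^-1` [set 0]).
  by apply: measurable_funB => //; exact: measurable_set1.
rewrite predeqE => x /=; split => [->|[_ /eqP]]; first by rewrite subrr.
by rewrite subr_eq0 => /eqP.
Qed.

Section Gen.
Context d (T : measurableType d) (R : realType) (P : probability T R).
Variables (gB gF : T -> R) (mgB : measurable_fun [set: T] gB)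
  (mgF : measurable_fun [set: T] gF) (f : R -> R).
Hypothesis indep : indep2 P gB gF.
Hypothesis dens : is_density P gF f.

Let muB := distribution P (@gm _ _ T (measurableTypeR R) gB mgB).
Let muF := distribution P (@gm _ _ T (measurableTypeR R) gF mgF).
Let mpair := @measurable_fun_pair _ _ _ T (measurableTypeR R) (measurableTypeR R) gF gB mgF mgB.
Let muJ := distribution P (gm mpair).

Lemma joint_prod S : measurable S ->
  P [set w | S (gF w, gB w)] = (muF \x muB)%E S.
Proof.
move=> mS; symmetry.
rewrite (@product_measure_unique _ _ _ _ _ muF muB muJ) //.
move=> A B mA mB.
transitivity (P (gB @^-1` B `&` gF @^-1` A)).
  transitivity (P ((fun x => (gF x, gB x)) @^-1` (A `*` B))); first by [].
  by congr (P _); apply/seteqP; split => x /= [].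
rewrite indep // muleC.
by [].
Qed.

Lemma muF_ac : muF `<< (@lebesgue_measure R).
Proof.
apply/null_content_dominatesP => A mA A0.
transitivity (P (gF @^-1` A)); first by [].
case: dens => f0 [mf ->] //.
apply: null_set_integral => //.
apply/measurable_EFinP; exact: measurable_funS mf.
Qed.

Lemma dens_int E (g : R -> \bar R) : measurable E -> (forall x, (0 <= g x)%E) ->
  measurable_fun E g ->
  (\int[muF]_(x in E) g x = \int[lebesgue_measure]_(x in E) (g x * (f x)%:E))%E.
Proof.
move=> mE g0 mg.
have [f0 [mf fE]] := dens.
rewrite -(@Radon_Nikodym_SigmaFinite.change_of_variables _ _ _ muF lebesgue_measure muF_ac _ _ g0 mE mg).
apply: ae_eq_integral => //.
- apply: emeasurable_funM => //; apply: measurable_funTS.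
  exact: measurable_int (Radon_Nikodym_SigmaFinite.f_integrable muF_ac).
- apply: emeasurable_funM => //; apply/(measurable_EFinP _ f); exact: measurable_funS mf.
apply: ae_eqe_mul2l.
apply: integral_ae_eq => //.
- apply: (integrableS measurableT) => //.
  exact: Radon_Nikodym_SigmaFinite.f_integrable muF_ac.
- apply/(measurable_EFinP _ f); exact: measurable_funS mf.
move=> A AE mA.
rewrite -Radon_Nikodym_SigmaFinite.f_integral //; last exact: muF_ac.
rewrite [LHS](_ : _ = P (gF @^-1` A)) //.
exact: fE.
Qed.


Lemma muB_le c : muB [set y | y <= c] = (cdfR P gB c)%:E.
Proof.
have mc : measurable [set w | gB w <= c].
  rewrite (_ : [set w | _] = [set: T] `&` gB @^-1` `]-oo, c]).
    by apply: mgB => //; exact: measurable_itv.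
  by apply/seteqP; split => w /=; rewrite in_itv /=; [move=> ->|case].
rewrite /cdfR fineK; first by [].
by rewrite fin_num_measure.
Qed.

Lemma prob_le_phi (D : set R) (phi : R -> R) : measurable D ->
  measurable_fun [set: R] phi ->
  P [set w | D (gF w) /\ gB w <= phi (gF w)] =
  (\int[lebesgue_measure]_(x in D) ((cdfR P gB (phi x)) * f x)%:E)%E.
Proof.
move=> mD mphi.
pose S := [set p : R * R | D p.1 /\ p.2 <= phi p.1].
have mS : measurable S.
  have m1 : measurable_fun [set: measurableTypeR R * measurableTypeR R]
      (fun p => p.2 - phi p.1).
    apply: measurable_funB; first exact: measurable_snd.
    exact: measurableT_comp mphi measurable_fst.
  rewrite (_ : S = (D `*` setT) `&`
     ([set: measurableTypeR R * measurableTypeR R] `&` ((fun p => p.2 - phi p.1) @^-1` `]-oo, 0]))).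
    apply: measurableI; first exact: measurableX.
    by apply: m1 => //; exact: measurable_itv.
  rewrite /S predeqE => -[x y] /=; rewrite in_itv /= subr_le0.
  by split => [[? ?]|[[? _] [_ ?]]].
rewrite (_ : [set w | _] = [set w | S (gF w, gB w)]) //.
rewrite joint_prod //.
transitivity (\int[muF]_x (muB \o xsection S) x)%E; first by [].
rewrite (dens_int _ _ measurableT); last 2 first.
- by move=> x; exact: measure_ge0.
- exact: measurable_fun_xsection.
rewrite [RHS]integral_mkcond; apply: eq_integral => x _.
rewrite patchE /=; case: ifPn => xD.
- rewrite (_ : xsection S x = [set y | y <= phi x]).
    by rewrite muB_le EFinM.
  rewrite /xsection /S predeqE => y /=; rewrite inE /=.
  split; first by case.
  by move=> h; split => //; exact: set_mem.
- have -> : xsection S x = set0.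
    rewrite /xsection /S predeqE => y /=; rewrite inE /=.
    split => //.
    by case => /mem_set; rewrite (negbTE xD).
  rewrite (_ : muB set0 = 0%E); last exact: measure0.
  by rewrite mul0e.
Qed.


Lemma prob_eq_affine (a b : R) : a != 0 ->
  P [set w | gB w = a * gF w + b] = 0%E.
Proof.
move=> a0.
pose S := [set p : R * R | p.2 = a * p.1 + b].
have mS : measurable S.
  have m1 : measurable_fun [set: measurableTypeR R * measurableTypeR R]
      (fun p => p.2 - (a * p.1 + b)).
    apply: measurable_funB; first exact: measurable_snd.
    apply: measurable_funD => //.
    apply: measurable_funM => //; exact: measurable_fst.
  rewrite (_ : S = [set: measurableTypeR R * measurableTypeR R] `&`
      ((fun p => p.2 - (a * p.1 + b)) @^-1` [set 0])).
    by apply: m1 => //; exact: measurable_set1.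
  rewrite /S predeqE => -[x y] /=.
  split => [->|[_ /eqP]]; first by rewrite subrr.
  by rewrite subr_eq0 => /eqP.
rewrite (_ : [set w | _] = [set w | S (gF w, gB w)]) //.
rewrite joint_prod //.
rewrite (@product_measure_unique _ _ _ _ _ muF muB (muF \x^ muB)%E) //; last first.
  by move=> A B mA mB; exact: product_measure2E.
transitivity (\int[muB]_y (muF \o ysection S) y)%E; first by [].
rewrite (_ : muF \o ysection S = fun=> 0%E); first by rewrite integral0.
apply: funext => y /=.
rewrite (_ : ysection S y = [set (y - b) / a]).
  transitivity (P (gF @^-1` [set (y - b) / a])); first by [].
  have [_ [_ fE]] := dens.
  by rewrite fE ?integral_set1 //; exact: measurable_set1.
rewrite /ysection /S predeqE => x /=; rewrite inE /=.
split => [->|->]; first by rewrite addrK mulrC mulKf.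
by rewrite mulrC divfK // subrK.
Qed.


Variables (rB rF gam : R).
Hypotheses (rB0 : 0 < rB) (rF0 : 0 < rF) (gam0 : 0 < gam).
Hypothesis PN : P [set w | gF w < 0] = 0%E.

Lemma main_gen (D : set R) : measurable D ->
  (forall x, D x <-> (0 <= x /\ rF * x < gam * rF * x + gam)) ->
  P [set w | rB * gB w / (rF * gF w + 1) < gam /\ gF w < rB / rF * gB w] =
  (\int[lebesgue_measure]_(x in D) (cdfR P gB ((gam * rF * x + gam) / rB) * f x)%:E
   - \int[lebesgue_measure]_(x in D) (cdfR P gB (rF / rB * x) * f x)%:E)%E.
Proof.
move=> mD HD.
pose u x := (gam * rF * x + gam) / rB.
pose l x := rF / rB * x.
have mu : measurable_fun setT u.
  rewrite /u; apply: measurable_funM => //; apply: measurable_funD => //.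
have ml : measurable_fun setT l by rewrite /l; exact: measurable_funM.
have mDg : measurable [set w | D (gF w)].
  by rewrite -[X in measurable X]setTI; exact: mgF.
have mA : measurable [set w | rB * gB w / (rF * gF w + 1) < gam /\ gF w < rB / rF * gB w].
  apply: measurableI.
    apply: (mlt (fun w => rB * gB w / (rF * gF w + 1)) (cst gam)) => //.
    apply: measurable_funM; first exact: measurable_funM.
    apply: measurableT_comp; first exact: measurable_inv.
    apply: measurable_funD => //.
    exact: measurable_funM.
  apply: mlt => //; exact: measurable_funM.
pose E0 := [set w | D (gF w) /\ (l (gF w) < gB w /\ gB w < u (gF w))].
pose E0' := [set w | D (gF w) /\ (l (gF w) < gB w /\ gB w <= u (gF w))].
pose E1 := [set w | D (gF w) /\ gB w <= u (gF w)].
pose E2 := [set w | D (gF w) /\ gB w <= l (gF w)].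
have mlg : measurable_fun setT (l \o gF) by exact: measurableT_comp.
have mug : measurable_fun setT (u \o gF) by exact: measurableT_comp.
have mE0 : measurable E0.
  apply: measurableI => //; apply: measurableI; first exact: (mlt (l \o gF)).
  exact: (mlt _ (u \o gF)).
have mE0' : measurable E0'.
  apply: measurableI => //; apply: measurableI; first exact: (mlt (l \o gF)).
  exact: (mle _ (u \o gF)).
have mE1 : measurable E1 by apply: measurableI => //; exact: (mle _ (u \o gF)).
have mE2 : measurable E2 by apply: measurableI => //; exact: (mle _ (l \o gF)).
have mN : measurable [set w | gF w < 0] by exact: (mlt _ (cst 0)).
have mNu : measurable [set w | gB w = u (gF w)] by exact: (meq _ (u \o gF)).
have Nu0 : P [set w | gB w = u (gF w)] = 0%E.
  rewrite -(prob_eq_affine (gam * rF / rB) (gam / rB)).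
    congr (P _); rewrite predeqE => w /=; rewrite /u.
    by rewrite mulrDl mulrAC.
  by rewrite !mulf_neq0 ?invr_eq0 // gt_eqF.
have -> : P [set w | rB * gB w / (rF * gF w + 1) < gam /\ gF w < rB / rF * gB w] = P E0.
  apply: (eq_mod_null P _ _ _ mA mE0 mN PN) => w /=.
  - move=> [h1 h2]; have [xlt|xge] := ltP (gF w) 0; [by right|left].
    have [k1 k2] := (@key1 R rB rF gam (gF w) (gB w) rB0 rF0 xge).1 (conj h1 h2).
    split; last by split.
    apply/HD; split => //; apply/(@key2 R rB rF gam (gF w) rB0); exact: lt_trans k1 k2.
  - move=> [Dx [h1 h2]]; left; have [x0 _] := (HD _).1 Dx.
    exact: (@key1 R rB rF gam (gF w) (gB w) rB0 rF0 x0).2 (conj h1 h2).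
have -> : P E0 = P E0'.
  apply: (eq_mod_null P _ _ _ mE0 mE0' mNu Nu0) => w /=.
  - by move=> [Dx [h1 h2]]; left; split => //; split => //; exact: ltW.
  - move=> [Dx [h1 h2]]; move: h2; rewrite le_eqVlt => /orP[/eqP ->|h2].
      by right.
    by left.
have E12 : E1 = E2 `|` E0'.
  rewrite /E1 /E2 /E0' predeqE => w /=; split.
    move=> [Dx h]; have [hl|hl] := leP (gB w) (l (gF w)); [left|right]; by split.
  case => [[Dx h]|[Dx [_ h]]]; split => //.
  have [_ k] := (HD _).1 Dx.
  have := (@key2 R rB rF gam (gF w) rB0).2 k.
  by move=> /ltW; apply: le_trans.
have PE1 : P E1 = (P E2 + P E0')%E.
  rewrite E12 measureU //.
  rewrite /E2 /E0' predeqE => w; split => //= -[[_ h1] [_ [h2 _]]].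
  by move: (le_lt_trans h1 h2); rewrite ltxx.
rewrite -(prob_le_phi _ _ mD mu) -(prob_le_phi _ _ mD ml) -/E1 -/E2 PE1.
rewrite (addeC (P E2)) addeK //; exact: fin_num_measure.
Qed.

End Gen.

Theorem theorem1 (d : measure_display) (T : measurableType d) (R : realType)
  (P : probability T R)
  (R1 R2 alpha lamGB lamGF PGB PGF sigma2 gam : R)
  (hGB hGF : T -> R) (zGB zGF : T -> R * R) (fGF : R -> R) :
  0 < R1 -> R1 < R2 -> 0 < alpha -> 0 < lamGB -> 0 < lamGF ->
  0 < PGB -> 0 < PGF -> 0 < sigma2 -> 0 < gam ->
  measurable_fun [set: T] hGB -> measurable_fun [set: T] hGF ->
  measurable_fun [set: T] zGB -> measurable_fun [set: T] zGF ->
  exp_mean P hGB lamGB -> exp_mean P hGF lamGF ->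
  uniform_on P zGB (disc R1) (pi * R1 ^+ 2) ->
  uniform_on P zGF (annulus R1 R2) (pi * (R2 ^+ 2 - R1 ^+ 2)) ->
  indep2 P hGB (fun w => dist0 (zGB w)) ->
  indep2 P hGF (fun w => dist0 (zGF w)) ->
  let gGB := fun w => gain alpha (hGB w) (dist0 (zGB w)) in
  let gGF := fun w => gain alpha (hGF w) (dist0 (zGF w)) in
  indep2 P gGB gGF ->
  is_density P gGF fGF ->
  let rhoGB := PGB / sigma2 in
  let rhoGF := PGF / sigma2 in
  let Fnear := cdfR P gGB in
  let Pout := P [set w | rhoGB * gGB w / (rhoGF * gGF w + 1) < gam /\
                         gGF w < PGB / PGF * gGB w] in
  (1 < gam ->
    Pout =
    (\int[lebesgue_measure]_(x in `[0%R, +oo[)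
        (Fnear ((gam * rhoGF * x + gam) / rhoGB) * fGF x)%:E
     - \int[lebesgue_measure]_(x in `[0%R, +oo[)
        (Fnear (rhoGF / rhoGB * x) * fGF x)%:E)%E) /\
  (gam <= 1 ->
    Pout =
    (\int[lebesgue_measure]_(x in dom_b gam rhoGF)
        (Fnear ((gam * rhoGF * x + gam) / rhoGB) * fGF x)%:E
     - \int[lebesgue_measure]_(x in dom_b gam rhoGF)
        (Fnear (rhoGF / rhoGB * x) * fGF x)%:E)%E).
Proof.
move=> R10 R12 al0 lB0 lF0 PB0 PF0 s0 gam0 mhB mhF mzB mzF expB expF unifB unifF indB indF.
move=> gGB gGF ind dns rhoGB rhoGF Fnear Pout.
have msq : measurable_fun [set: R * R] (@sqnorm2 R).
  rewrite /sqnorm2; apply: measurable_funD.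
    exact: measurableT_comp (exprn_measurable _) measurable_fst.
  exact: measurableT_comp (exprn_measurable _) measurable_snd.
have mdist : measurable_fun [set: R * R] (@dist0 R).
  exact: measurableT_comp (continuous_measurable_fun (@sqrt_continuous R)) msq.
have mgB : measurable_fun [set: T] gGB.
  rewrite /gGB /gain; apply: (measurable_funM mhB).
  exact: (measurableT_comp (@measurable_powR R (- alpha)) (measurableT_comp mdist mzB)).
have mgF : measurable_fun [set: T] gGF.
  rewrite /gGF /gain; apply: (measurable_funM mhF).
  exact: (measurableT_comp (@measurable_powR R (- alpha)) (measurableT_comp mdist mzF)).
have rB0 : 0 < rhoGB by rewrite /rhoGB divr_gt0.
have rF0 : 0 < rhoGF by rewrite /rhoGF divr_gt0.
have PN : P [set w | gGF w < 0] = 0%E.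
  have mN : measurable [set w | gGF w < 0] by exact: (mlt _ (cst 0)).
  have mH : measurable (hGF @^-1` `]-oo, 0[).
    by rewrite -[X in measurable X]setTI; apply: mhF => //; exact: measurable_itv.
  have H0 : P (hGF @^-1` `]-oo, 0[) = 0%E.
    rewrite expF; last exact: measurable_itv.
    rewrite /exponential_prob.
    rewrite (eq_integral (fun=> 0%E)); first by rewrite integral0.
    move=> x; rewrite inE /= in_itv /= => x0.
    by rewrite lt0_exponential_pdf.
  apply/eqP; rewrite eq_le measure_ge0 andbT -H0.
  apply: le_measure; rewrite ?inE //.
  move=> w /=; rewrite in_itv /=; apply: contraLR; rewrite -!leNgt => h.
  by rewrite /gGF /gain mulr_ge0 // powR_ge0.
rewrite /Pout.
have -> : PGB / PGF = rhoGB / rhoGF.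
  rewrite /rhoGB /rhoGF; field.
  by rewrite !gt_eqF.
rewrite /Fnear; split => [g1|g1].
  apply: (@main_gen _ _ _ P gGB gGF mgB mgF fGF ind dns _ _ gam rB0 rF0 gam0 PN); first exact: measurable_itv.
  move=> x; rewrite /= in_itv /= andbT; split => [x0|[] //].
  split => //.
  have g1' : 0 <= gam - 1 by rewrite subr_ge0 ltW.
  have := mulr_ge0 g1' (mulr_ge0 (ltW rF0) x0).
  lra.
have mDb : measurable (dom_b gam rhoGF).
  by rewrite /dom_b; case: ifP => _; exact: measurable_itv.
apply: (@main_gen _ _ _ P gGB gGF mgB mgF fGF ind dns _ _ gam rB0 rF0 gam0 PN _ mDb).
move=> x; rewrite /dom_b; case: eqP => [->|g1n].
  rewrite /= in_itv /= andbT; split => [x0|[] //]; split => //; lra.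
have g1' : gam < 1 by rewrite lt_neqAle g1 andbT; apply/eqP.
have k0 : 0 < rhoGF * (1 - gam) by rewrite mulr_gt0 // subr_gt0.
rewrite /= in_itv /= ltr_pdivlMr //.
split => [/andP[x0 h]|[x0 h]].
  split => //; lra.
apply/andP; split => //; lra.
Qed.
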